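(* Let $X$ be a shift space and $k\ge1$. The $k$-th higher block shift space $X^{(k)}$ is eventually dendric if and only if $X$ is eventually dendric.
   Context: $A$ is a finite alphabet; a shift space is a closed shift-invariant subset $X\subseteq A^{\mathbb Z}$ with language $\mathcal L(X)$ (finite factors), $\mathcal L_k(X)=\mathcal L(X)\cap A^k$. Given a bijection $f:\mathcal L_k(X)\to A_k$ onto a new alphabet $A_k$, the $k$-th higher block code $\gamma_k:X\to A_k^{\mathbb Z}$ is defined by $\gamma_k(x)_n=f(x_n\cdots x_{n+k-1})$ for all $n\in\mathbb Z$, and $X^{(k)}=\gamma_k(X)$ is the $k$-th higher block shift space. For a shift space $Y$ over alphabet $B$ and $w\in\mathcal L(Y)$, the extension graph $\mathcal E_1(w)$ is the undirected bipartite graph with vertex set the disjoint union of $\{a\in B: aw\in\mathcal L(Y)\}$ and $\{b\in B: wb\in\mathcal L(Y)\}$ and an edge $(a,b)$ iff $awb\in\mathcal L(Y)$. $Y$ is eventually dendric if for some $m\ge0$, $\mathcal E_1(w)$ is a tree for every $w\in\mathcal L(Y)$ of length $\ge m$. *)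

(* Defs.v *)
From Stdlib Require Import ZArith ClassicalEpsilon.
From mathcomp Require Import all_boot.
Set Implicit Arguments. Unset Strict Implicit. Unset Printing Implicit Defensive.

(* Classical boolean reflection of a proposition (to use fingraph's bool relations). *)
Definition pb (P : Prop) : bool :=
  if excluded_middle_informative P then true else false.

Definition shiftZ (A : Type) (x : Z -> A) : Z -> A := fun n => x (n + 1)%Z.
Definition ishiftZ (A : Type) (x : Z -> A) : Z -> A := fun n => x (n - 1)%Z.

(* Closedness in the product topology of A^Z (A discrete): a point all of whose
   central blocks x_[-n,n] are matched by points of X lies in X. *)
Definition closed_set (A : finType) (X : (Z -> A) -> Prop) : Prop :=
  forall x : Z -> A,
    (forall n : nat, exists y, X y /\
       forall i : Z, (Z.abs i <= Z.of_nat n)%Z -> y i = x i) -> X x.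

Definition shift_space (A : finType) (X : (Z -> A) -> Prop) : Prop :=
  closed_set X /\
  (forall x, X x -> X (shiftZ x)) /\ (forall x, X x -> X (ishiftZ x)).

Definition block (A : Type) (x : Z -> A) (n : Z) (k : nat) : seq A :=
  mkseq (fun i => x (n + Z.of_nat i)%Z) k.

Definition inL (A : finType) (X : (Z -> A) -> Prop) (w : seq A) : Prop :=
  exists x, X x /\ exists n : Z, w = block x n (size w).

Definition block_bijection (A B : finType) (X : (Z -> A) -> Prop) (k : nat)
    (f : seq A -> B) : Prop :=
  (forall w1 w2, inL X w1 -> size w1 = k -> inL X w2 -> size w2 = k ->
     f w1 = f w2 -> w1 = w2) /\
  (forall b : B, exists w, inL X w /\ size w = k /\ f w = b).

Definition higher_block_code (A B : Type) (f : seq A -> B) (k : nat)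
    (x : Z -> A) : Z -> B := fun n => f (block x n k).

Definition higher_block_shift (A B : finType) (X : (Z -> A) -> Prop) (k : nat)
    (f : seq A -> B) : (Z -> B) -> Prop :=
  fun y => exists x, X x /\ y = higher_block_code f k x.

(* Extension graph E_1(w): vertices inl a (left, a w in L) and inr b (right, w b in L),
   undirected edge between inl a and inr b iff a w b in L. *)
Definition ext_vertex (B : finType) (Y : (Z -> B) -> Prop) (w : seq B)
    (v : B + B) : bool :=
  match v with
  | inl a => pb (inL Y (a :: w))
  | inr b => pb (inL Y (rcons w b))
  end.

Definition ext_edge (B : finType) (Y : (Z -> B) -> Prop) (w : seq B) : rel (B + B) :=
  fun u v =>
    match u, v with
    | inl a, inr b => pb (inL Y (a :: rcons w b))
    | inr b, inl a => pb (inL Y (a :: rcons w b))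
    | _, _ => false
    end.

(* A (finite, simple, undirected) graph is a tree: nonempty, connected, and without
   cycles (a cycle = a closed walk through >= 3 pairwise distinct vertices). *)
Definition ext_is_tree (B : finType) (Y : (Z -> B) -> Prop) (w : seq B) : Prop :=
  (exists v, ext_vertex Y w v) /\
  (forall u v, ext_vertex Y w u -> ext_vertex Y w v -> connect (ext_edge Y w) u v) /\
  (forall c : seq (B + B), uniq c -> 2 < size c -> ~~ cycle (ext_edge Y w) c).

Definition eventually_dendric (B : finType) (Y : (Z -> B) -> Prop) : Prop :=
  exists m : nat, forall w : seq B, inL Y w -> m <= size w -> ext_is_tree Y w.

(* Main.v *)
Require Import Defs.
From Stdlib Require Import ZArith Lia ClassicalEpsilon.
From mathcomp Require Import all_boot zify.
Set Implicit Arguments. Unset Strict Implicit. Unset Printing Implicit Defensive.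

Lemma pbP (P : Prop) : reflect P (pb P).
Proof. rewrite /pb; case: excluded_middle_informative => h; by constructor. Qed.

Lemma size_block (T : Type) (x : Z -> T) n N : size (block x n N) = N.
Proof. exact: size_mkseq. Qed.

Lemma block_cons (T : Type) (x : Z -> T) n N :
  block x n N.+1 = x n :: block x (n + 1)%Z N.
Proof.
rewrite /block /mkseq -add1n iotaD /= Z.add_0_r; congr (_ :: _).
rewrite (iotaDl 1 0) -map_comp; apply: eq_map => i; rewrite /comp Nat2Z.inj_add; congr x; lia.
Qed.

Lemma block_cat (T : Type) (x : Z -> T) n a b :
  block x n (a + b) = block x n a ++ block x (n + Z.of_nat a)%Z b.
Proof.
elim: a n => [|a IH] n; first by rewrite Z.add_0_r.
rewrite addSn !block_cons IH -cat_cons; congr (_ ++ block x _ b); lia.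
Qed.

Lemma inL_cat (T : finType) (Y : (Z -> T) -> Prop) s t :
  inL Y (s ++ t) -> inL Y s /\ inL Y t.
Proof.
case=> x [Yx [n e]]; rewrite size_cat block_cat in e.
move/eqP: e; rewrite eqseq_cat ?size_block // => /andP[/eqP e1 /eqP e2].
by split; exists x; split=> //; [exists n | exists (n + Z.of_nat (size s))%Z].
Qed.

Lemma inL_take (T : finType) (Y : (Z -> T) -> Prop) s i : inL Y s -> inL Y (take i s).
Proof. by rewrite -{1}(cat_take_drop i s) => /inL_cat[]. Qed.
Lemma inL_drop (T : finType) (Y : (Z -> T) -> Prop) s i : inL Y s -> inL Y (drop i s).
Proof. by rewrite -{1}(cat_take_drop i s) => /inL_cat[]. Qed.
Lemma inL_behead (T : finType) (Y : (Z -> T) -> Prop) c s : inL Y (c :: s) -> inL Y s.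
Proof. by rewrite -cat1s => /inL_cat[]. Qed.
Lemma inL_belast (T : finType) (Y : (Z -> T) -> Prop) c s : inL Y (rcons s c) -> inL Y s.
Proof. by rewrite -cats1 => /inL_cat[]. Qed.

Fixpoint code (A B : Type) (f : seq A -> B) (k : nat) (u : seq A) : seq B :=
  match u with
  | [::] => [::]
  | c :: u' => if k <= size u then f (take k u) :: code f k u' else [::]
  end.

Lemma code_small (A B : Type) (f : seq A -> B) k u : size u < k -> code f k u = [::].
Proof. case: u => //= c u h; by rewrite leqNgt h. Qed.

Lemma size_code (A B : Type) (f : seq A -> B) k u : 0 < k -> size (code f k u) = (size u).+1 - k.
Proof.
move=> k0; elim: u => [|c u IH] /=; first by case: k k0.
case: ifP => h /=; last by apply/esym/eqP; rewrite subn_eq0 ltnNge h.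
rewrite IH; case: k k0 h {IH} => // k _ h; rewrite !subSS subSn //.
Qed.

Lemma code_cons (A B : Type) (f : seq A -> B) k c u :
  k <= (size u).+1 -> code f k (c :: u) = f (take k (c :: u)) :: code f k u.
Proof. by move=> h /=; rewrite h. Qed.

Lemma code_rcons (A B : Type) (f : seq A -> B) k u d : 0 < k ->
  k <= (size u).+1 ->
  code f k (rcons u d) = rcons (code f k u) (f (drop ((size u).+1 - k) (rcons u d))).
Proof.
move=> k0; elim: u => [|c u IH] /= h.
  by case: k k0 h => // [[|]] //.
rewrite size_rcons h; case: (leqP k (size u).+1) => h2.
  rewrite IH // rcons_cons; congr (f _ :: rcons _ (f _)).
    by rewrite -rcons_cons -cats1 takel_cat.
  by rewrite (subSn h2).
rewrite code_small ?size_rcons //=.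
have -> : (size u).+2 - k = 0 by apply/eqP; rewrite subn_eq0.
by rewrite drop0 take_oversize //= size_rcons.
Qed.

Lemma code_block (A B : Type) (f : seq A -> B) k (x : Z -> A) n N : 0 < k ->
  code f k (block x n N) = block (higher_block_code f k x) n (N.+1 - k).
Proof.
move=> k0; elim: N n => [|N IH] n.
  by case: k k0.
rewrite block_cons /= size_block; case: ifP => h.
  rewrite IH (subSn h) [in RHS]block_cons; congr (_ :: _).
  rewrite /higher_block_code -block_cons -(subnKC h) block_cat take_size_cat //.
  by rewrite size_block.
by have -> : N.+2 - k = 0 by apply/eqP; rewrite subn_eq0 ltnNge h.
Qed.

Definition gtree (T : finType) (V : pred T) (e : rel T) : Prop :=
  (exists v, V v) /\ (forall u v, V u -> V v -> connect e u v) /\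
  (forall c : seq T, uniq c -> 2 < size c -> ~~ cycle e c).

Lemma push_path (T1 T2 : finType) (e1 : rel T1) (e2 : rel T2) (phi : T1 -> T2) :
  (forall x y, e1 x y -> e2 (phi x) (phi y)) ->
  forall a p, path e1 a p -> path e2 (phi a) (map phi p).
Proof. move=> H a p; elim: p a => //= x p IH a /andP[h1 h2]. by rewrite H // IH. Qed.

Lemma pull_path (T1 T2 : finType) (V1 : pred T1) (e1 : rel T1) (e2 : rel T2) (phi : T1 -> T2) :
  (forall x y, V1 x -> V1 y -> e2 (phi x) (phi y) -> e1 x y) ->
  forall a p, V1 a -> all V1 p -> path e2 (phi a) (map phi p) -> path e1 a p.
Proof.
move=> H a p; elim: p a => //= x p IH a Va /andP[Vx Vp] /andP[h1 h2].
by rewrite H // IH.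
Qed.

Lemma pull_seq (T1 T2 : finType) (V1 : pred T1) (V2 : pred T2) (phi : T1 -> T2) :
  (forall y, V2 y -> exists x, V1 x /\ phi x = y) ->
  forall p, all V2 p -> exists p', all V1 p' /\ map phi p' = p.
Proof.
move=> H; elim=> [|y p IH] /=; first by exists [::].
case/andP=> /H[x [Vx <-]] /IH[p' [Vp' <-]]; exists (x :: p'); by rewrite /= Vx.
Qed.

Lemma path_all (T : finType) (V : pred T) (e : rel T) :
  (forall x y, e x y -> V x && V y) -> forall a p, path e a p -> all V p.
Proof.
move=> H a p; elim: p a => //= x p IH a /andP[h1 h2].
by case/andP: (H _ _ h1) => _ ->; rewrite (IH x).
Qed.

Lemma cycle_all (T : finType) (V : pred T) (e : rel T) :
  (forall x y, e x y -> V x && V y) -> forall c, cycle e c -> all V c.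
Proof.
move=> H c Hc; apply/allP=> x xc; have := next_cycle Hc xc.
by case/H/andP.
Qed.

Section Dummy. End Dummy.

Lemma transfer (T1 T2 : finType) (V1 : pred T1) (e1 : rel T1) (V2 : pred T2) (e2 : rel T2)
  (phi : T1 -> T2) :
  (forall x, V1 x -> V2 (phi x)) ->
  (forall y, V2 y -> exists x, V1 x /\ phi x = y) ->
  (forall x x', V1 x -> V1 x' -> phi x = phi x' -> x = x') ->
  (forall x y, V1 x -> V1 y -> e1 x y = e2 (phi x) (phi y)) ->
  (forall x y, e1 x y -> V1 x && V1 y) ->
  (forall x y, e2 x y -> V2 x && V2 y) ->
  (gtree V1 e1 <-> gtree V2 e2).
Proof.
move=> HV Hs Hi He Hv1 Hv2.
have push : forall x y, e1 x y -> e2 (phi x) (phi y).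
  by move=> x y h; case/andP: (Hv1 _ _ h) => a b; rewrite -He.
have pull : forall x y, V1 x -> V1 y -> e2 (phi x) (phi y) -> e1 x y.
  by move=> x y a b; rewrite -He.
split.
- case=> [[v Vv] [Hc Ha]]; split; first by exists (phi v); apply: HV.
  split.
  + move=> y1 y2 /Hs[x1 [V1x1 <-]] /Hs[x2 [V2x2 <-]].
    case/connectP: (Hc _ _ V1x1 V2x2) => p pp ->.
    apply/connectP; exists (map phi p); first exact: (push_path push).
    by rewrite last_map.
  + move=> c uc sc; apply/negP=> cc.
    have /(pull_seq Hs)[c' [Vc' ec']] := cycle_all Hv2 cc.
    subst c.
    rewrite size_map in sc.
    move: (Ha c' (map_uniq uc) sc) => /negP; apply.
    case: c' Vc' cc {uc sc} => //= x p /andP[Vx Vp]; rewrite -map_rcons.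
    by apply: (pull_path pull) => //; rewrite all_rcons Vx Vp.
- case=> [[v Vv] [Hc Ha]]; split.
    by case: (Hs _ Vv) => x [Vx _]; exists x.
  split.
  + move=> x1 x2 V1x1 V1x2.
    case/connectP: (Hc _ _ (HV _ V1x1) (HV _ V1x2)) => p pp lp.
    have Vp := path_all Hv2 pp.
    case: (pull_seq Hs Vp) => p' [Vp' ep']; rewrite -ep' in pp lp; clear Vp.
    apply/connectP; exists p'; first exact: (pull_path pull).
    apply: Hi => //.
      clear ep' lp pp; move: Vp' V1x1; case/lastP: p' => [|s z] /=; first by [].
      by rewrite last_rcons all_rcons => /andP[].
    by rewrite lp last_map.
  + move=> c uc sc; apply/negP=> cc.
    have Vc := cycle_all Hv1 cc.
    move: (Ha (map phi c)); rewrite size_map sc map_inj_in_uniq ?uc.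
      move=> /(_ isT isT)/negP; apply.
      case: c cc {uc sc Vc} => //= x p cc; rewrite -map_rcons; exact: (push_path push).
    move=> x y xc yc; apply: Hi; by [apply: (allP Vc) | ].
Qed.

Lemma ext_edge_vert (T : finType) (Y : (Z -> T) -> Prop) w x y :
  ext_edge Y w x y -> ext_vertex Y w x && ext_vertex Y w y.
Proof.
case: x => a; case: y => b //= /pbP h.
- by apply/andP; split; apply/pbP;
    [move: h; rewrite -rcons_cons => /inL_belast | move: h => /inL_behead].
- by apply/andP; split; apply/pbP;
    [move: h => /inL_behead | move: h; rewrite -rcons_cons => /inL_belast].
Qed.

Lemma L_fwd (A B : finType) (X : (Z -> A) -> Prop) k (f : seq A -> B) v :
  0 < k -> inL X v -> inL (higher_block_shift X k f) (code f k v).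
Proof.
move=> k0 [x [Xx [n e]]]; exists (higher_block_code f k x); split; first by exists x.
exists n; by rewrite e code_block // size_block.
Qed.

Lemma L_bwd (A B : finType) (X : (Z -> A) -> Prop) k (f : seq A -> B) w :
  0 < k -> inL (higher_block_shift X k f) w ->
  exists v, inL X v /\ size v = size w + k.-1 /\ code f k v = w.
Proof.
move=> k0 [y [[x [Xx ->]] [n e]]].
exists (block x n (size w + k.-1)); split; first by exists x; split=> //; exists n; rewrite size_block.
rewrite size_block code_block //; split=> //.
have -> : (size w + k.-1).+1 - k = size w by case: (k) k0 => //= k' _; rewrite subSS addnK.
by rewrite -e.
Qed.

Lemma take_cons_k (A : Type) k (c : A) s : 0 < k -> take k (c :: s) = c :: take k.-1 s.
Proof. by case: k. Qed.

Lemma code_uniq (A B : finType) (X : (Z -> A) -> Prop) k (f : seq A -> B) :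
  0 < k ->
  (forall w1 w2, inL X w1 -> size w1 = k -> inL X w2 -> size w2 = k ->
     f w1 = f w2 -> w1 = w2) ->
  forall u1 u2, inL X u1 -> inL X u2 -> size u1 = size u2 -> k <= size u1 ->
   code f k u1 = code f k u2 -> u1 = u2.
Proof.
move=> k0 Hf; elim=> [|c1 u1 IH] [|c2 u2] //= L1 L2 [es] hk.
rewrite -es hk => -[ef ec].
have et : take k (c1 :: u1) = take k (c2 :: u2).
  apply: Hf => //; try exact: inL_take.
    by rewrite size_takel.
  by rewrite size_takel //= -es.
case: (leqP k (size u1)) => h.
  move: et; rewrite !take_cons_k // => -[-> _]; congr (_ :: _).
  apply: IH => //; [exact: inL_behead L1 | exact: inL_behead L2].
by move: et; rewrite !take_oversize //= -es.
Qed.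

Lemma code_cons_rcons (A B : Type) (f : seq A -> B) k c v d : 0 < k -> k <= size v ->
  code f k (c :: rcons v d) =
  f (take k (c :: v)) :: rcons (code f k v) (f (drop ((size v).+1 - k) (rcons v d))).
Proof.
move=> k0 h; have h1 : k <= (size v).+1 := leqW h.
rewrite code_cons ?size_rcons ?(leqW h1) // code_rcons //.
by congr (f _ :: _); rewrite -rcons_cons -cats1 takel_cat.
Qed.
Lemma core (A B : finType) (X : (Z -> A) -> Prop) k (f : seq A -> B) u :
  0 < k ->
  (forall w1 w2, inL X w1 -> size w1 = k -> inL X w2 -> size w2 = k ->
     f w1 = f w2 -> w1 = w2) ->
  inL X u -> k <= size u ->
  (ext_is_tree X u <-> ext_is_tree (higher_block_shift X k f) (code f k u)).
Proof.
move=> k0 Hf Lu hk.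
set Y := higher_block_shift X k f; set w := code f k u.
set lf := fun c => f (take k (c :: u)).
set rt := fun d => f (drop ((size u).+1 - k) (rcons u d)).
pose phi := fun v : A + A => match v with inl c => inl (lf c) | inr d => inr (rt d) end.
have hk1 : k <= (size u).+1 := leqW hk.
have sw : size w = (size u).+1 - k by rewrite size_code.
have U := code_uniq k0 Hf.
have Ha : forall c, inL X (c :: u) -> inL Y (lf c :: w).
  by move=> c /(L_fwd f k0); rewrite code_cons.
have Hb : forall d, inL X (rcons u d) -> inL Y (rcons w (rt d)).
  by move=> d /(L_fwd f k0); rewrite code_rcons.
have Hc : forall a, inL Y (a :: w) -> exists c, inL X (c :: u) /\ lf c = a.
  move=> a /(L_bwd k0)[v [Lv [sv ev]]].
  case: v Lv sv ev => [|c v] Lv sv ev; first by [].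
  have svu : size v = size u by move: sv; rewrite /= sw; lia.
  move: ev; rewrite code_cons ?svu // => -[ea ew].
  have ev : v = u by apply: U => //; [exact: inL_behead Lv | rewrite svu].
  by subst v; exists c.
have Hd : forall b, inL Y (rcons w b) -> exists d, inL X (rcons u d) /\ rt d = b.
  move=> b /(L_bwd k0)[v [Lv [sv ev]]].
  case/lastP: v Lv sv ev => [|v d] Lv sv ev; first by move: sv; rewrite /= size_rcons; lia.
  have svu : size v = size u by move: sv; rewrite !size_rcons sw; lia.
  move: ev; rewrite code_rcons ?svu // => /eqP; rewrite eqseq_rcons => /andP[/eqP ew /eqP eb].
  have ev : v = u by apply: U => //; [exact: inL_belast Lv | rewrite svu].
  by subst v; exists d.
have He : forall c c', inL X (c :: u) -> inL X (c' :: u) -> lf c = lf c' -> c = c'.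
  move=> c c' L1 L2 e.
  have : take k (c :: u) = take k (c' :: u).
    by apply: Hf => //; try exact: inL_take; rewrite size_takel.
  by rewrite !take_cons_k // => -[].
have Hf2 : forall d d', inL X (rcons u d) -> inL X (rcons u d') -> rt d = rt d' -> d = d'.
  move=> d d' L1 L2 e.
  have hj : (size u).+1 - k <= size u by case: (k) k0 => //= k' _; rewrite subSS leq_subr.
  have : drop ((size u).+1 - k) (rcons u d) = drop ((size u).+1 - k) (rcons u d').
    apply: Hf => //; try exact: inL_drop;
      rewrite size_drop size_rcons subKn //.
  by rewrite !drop_rcons // => /eqP; rewrite eqseq_rcons => /andP[_ /eqP].
have Hg : forall c d, inL X (c :: rcons u d) -> inL Y (lf c :: rcons w (rt d)).
  by move=> c d /(L_fwd f k0); rewrite code_cons_rcons.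
have Hh : forall c d, inL X (c :: u) -> inL X (rcons u d) ->
    inL Y (lf c :: rcons w (rt d)) -> inL X (c :: rcons u d).
  move=> c d L1 L2 /(L_bwd k0)[v [Lv [sv ev]]].
  case: v Lv sv ev => [|c' v] Lv sv ev; first by [].
  case/lastP: v Lv sv ev => [|v d'] Lv sv ev.
    by move: sv; rewrite /= size_rcons.
  have svu : size v = size u by move: sv; rewrite /= !size_rcons sw; lia.
  move: ev; rewrite code_cons_rcons ?svu // => -[e1 /eqP].
  rewrite eqseq_rcons => /andP[/eqP ew /eqP e2].
  have ev : v = u.
    apply: U => //; last by rewrite svu.
    by move: Lv => /inL_behead /inL_belast.
  subst v.
  have ec : c' = c.
    apply: (He c' c) => //.
    by move: Lv; rewrite -rcons_cons => /inL_belast.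
  have ed : d' = d.
    apply: (Hf2 d' d) => //.
    exact: inL_behead Lv.
  by subst.
change (gtree (ext_vertex X u) (ext_edge X u) <-> gtree (ext_vertex Y w) (ext_edge Y w)).
apply: (transfer (phi := phi)).
- by case=> [c|d] /pbP h; apply/pbP; [apply: Ha | apply: Hb].
- case=> [a|b] /pbP h.
    by case: (Hc _ h) => c [L e]; exists (inl c); split=> //=; [apply/pbP | rewrite e].
  by case: (Hd _ h) => d [L e]; exists (inr d); split=> //=; [apply/pbP | rewrite e].
- case=> [c|d] [c'|d'] //= /pbP h /pbP h' [e]; by rewrite ?(He _ _ h h' e) ?(Hf2 _ _ h h' e).
- case=> [c|d] [c'|d'] //= /pbP h /pbP h'; apply/pbP/pbP; by [apply: Hg | apply: Hh].
- exact: ext_edge_vert.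
- exact: ext_edge_vert.
Qed.

Theorem mainTheorem9 (A B : finType) (X : (Z -> A) -> Prop) (k : nat)
    (f : seq A -> B) :
  shift_space X -> 1 <= k -> block_bijection X k f ->
  (eventually_dendric (higher_block_shift X k f) <-> eventually_dendric X).
Proof.
move=> _ k0 [Hf _]; split.
- case=> m Hm; exists (m + k) => u Lu hu.
  have hk : k <= size u by apply: leq_trans hu; apply: leq_addl.
  apply/(core (f:=f) k0 Hf Lu hk); apply: Hm; first exact: L_fwd.
  rewrite size_code //; lia.
- case=> m Hm; exists m.+1 => w Lw hw.
  case: (L_bwd k0 Lw) => v [Lv [sv <-]].
  have hk : k <= size v by rewrite sv; lia.
  apply/(core (f:=f) k0 Hf Lv hk); apply: Hm => //.
  rewrite sv; lia.
Qed.
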